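(* Let $(S,W)$ be the spherical Coxeter complex of type $D_n$ ($n\ge4$). Let $\lambda_i:=\frac{1}{\sqrt{2(n+1-i)}}$ for $i\neq2$ and $\lambda_2:=\lambda_1$. Let $\alpha\subset S$ be a root and let $v$ be a vertex of type $i$ in the interior of $\alpha$. Then $\sin d(v,\partial\alpha)\in\{\lambda_i,2\lambda_i\}$. Moreover, if $i=n$ then $\sin d(v,\partial\alpha)=\lambda_n$, and if $i\in\{1,2\}$ then $\sin d(v,\partial\alpha)=2\lambda_1=2\lambda_2$.
   Context: $S$ is the unit sphere in $\mathbb{R}^n$ with standard basis $e_1,\dots,e_n$, and $W$ is the Weyl group of $D_n$ (permutations of coordinates combined with an even number of sign changes), acting by reflections. Roots of $(S,W)$ are the closed hemispheres $\{x:\langle x,c\rangle\ge0\}$ with center $c=\frac{1}{\sqrt2}(\pm e_j\pm e_k)$, $j\ne k$; $\partial\alpha$ is the boundary great sphere of $\alpha$. Vertex types: a vertex is of type $i\neq 2$ if it lies in the $W$-orbit of $\frac{1}{\sqrt{n+1-i}}(e_i+e_{i+1}+\dots+e_n)$, and of type $2$ if it lies in the $W$-orbit of $\frac{1}{\sqrt n}(-e_1+e_2+\dots+e_n)$. The interior of $\alpha$ is $\alpha\setminus\partial\alpha$; $d$ is the spherical metric. *)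

(* Defs.v *)
(* R : realType. Points of R^n are
   functions 'I_n -> R; coordinate e_{m+1} of the paper is index m : 'I_n. *)
From mathcomp Require Import all_boot all_order all_algebra.
From mathcomp Require Import all_fingroup.
From mathcomp Require Import all_classical all_reals all_analysis.
Import Order.TTheory GRing.Theory Num.Theory.
Local Open Scope ring_scope.
Local Open Scope classical_set_scope.

Definition dotp {R : realType} {n : nat} (x y : 'I_n -> R) : R :=
  \sum_(k < n) x k * y k.

Definition sphere {R : realType} (n : nat) : set ('I_n -> R) :=
  [set x | dotp x x = 1].

Definition sdist {R : realType} {n : nat} (x y : 'I_n -> R) : R :=
  acos (dotp x y).

Definition sdist_set {R : realType} {n : nat} (x : 'I_n -> R)
  (A : set ('I_n -> R)) : R :=
  inf [set sdist x y | y in A].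

Definition root_center {R : realType} {n : nat} (j k : 'I_n) (sj sk : bool)
  : 'I_n -> R :=
  fun m => ((if m == j then (-1) ^+ sj else 0) +
            (if m == k then (-1) ^+ sk else 0)) / Num.sqrt 2.

(* the root (closed hemisphere) with center c *)
Definition hemisphere {R : realType} {n : nat} (c : 'I_n -> R)
  : set ('I_n -> R) := [set x | sphere n x /\ 0 <= dotp x c].

Definition great_sphere {R : realType} {n : nat} (c : 'I_n -> R)
  : set ('I_n -> R) := [set x | sphere n x /\ dotp x c = 0].

Definition root_interior {R : realType} {n : nat} (c : 'I_n -> R)
  : set ('I_n -> R) := hemisphere c `\` great_sphere c.

(* The Weyl group W(D_n): permutations of coordinates combined with an even
   number of sign changes. The element (s, e) acts by
   x |-> (m |-> (-1)^(e m) * x (s m)). *)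
Definition weyl_act {R : realType} {n : nat} (s : 'S_n) (e : 'I_n -> bool)
  (x : 'I_n -> R) : 'I_n -> R :=
  fun m => (-1) ^+ (e m) * x (s m).

Definition even_signs {n : nat} (e : 'I_n -> bool) : bool :=
  ~~ odd #|[pred m | e m]|.

(* representative vertex of type i (1 <= i <= n) *)
Definition type_rep {R : realType} (n i : nat) : 'I_n -> R :=
  if i == 2%N then
    fun m => (if val m == 0%N then -1 else 1) / Num.sqrt (n%:R)
  else
    fun m => (if (i.-1 <= val m)%N then 1 else 0) / Num.sqrt ((n + 1 - i)%:R).

Definition vertex_of_type {R : realType} (n i : nat) (v : 'I_n -> R) : Prop :=
  exists (s : 'S_n) (e : 'I_n -> bool),
    even_signs e /\ v = weyl_act s e (type_rep n i).

Definition lam {R : realType} (n i : nat) : R :=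
  if i == 2%N then 1 / Num.sqrt ((2 * n)%:R)
  else 1 / Num.sqrt ((2 * (n + 1 - i))%:R).

(* Main.v *)
Require Import Defs.
From mathcomp Require Import all_boot all_order all_algebra.
From mathcomp Require Import all_fingroup.
From mathcomp Require Import all_classical all_reals all_analysis.
From mathcomp Require Import ring lra.
Import Order.TTheory GRing.Theory Num.Theory.
Local Open Scope ring_scope.


Section S.
Variable R : realType.
Variable n : nat.
Implicit Types (x y z c v u : 'I_n -> R).

Lemma dotpC x y : dotp x y = dotp y x.
Proof. by apply: eq_bigr => m _; rewrite mulrC. Qed.

Lemma dotp_lin a b z (r q : R) :
  dotp (fun m => (a m - r * b m) / q) z = dotp a z / q - r * dotp b z / q.
Proof.
rewrite /dotp mulr_sumr !mulr_suml -sumrB; apply: eq_bigr => m _; ring.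
Qed.

Lemma quad v c y (t s : R) :
  0 <= dotp v v + t ^+ 2 * dotp c c + s ^+ 2 * dotp y y
       - 2 * t * dotp v c - 2 * s * dotp v y + 2 * t * s * dotp c y.
Proof.
have H : 0 <= \sum_(m < n) (v m - t * c m - s * y m) ^+ 2.
  by apply: sumr_ge0 => m _; exact: sqr_ge0.
have E : \sum_(m < n) (v m - t * c m - s * y m) ^+ 2
   + 2 * t * dotp v c + 2 * s * dotp v y =
   dotp v v + t ^+ 2 * dotp c c + s ^+ 2 * dotp y y + 2 * t * s * dotp c y.
  rewrite /dotp !mulr_sumr -!big_split /=; apply: eq_bigr => m _; ring.
lra.
Qed.

Lemma dotp_center x (j k : 'I_n) sj sk :
  dotp x (root_center j k sj sk) =
  ((-1) ^+ sj * x j + (-1) ^+ sk * x k) / Num.sqrt 2.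
Proof.
rewrite /dotp /root_center.
transitivity (\sum_(m < n) ((if m == j then x j * (-1) ^+ sj / Num.sqrt 2 else 0)
   + (if m == k then x k * (-1) ^+ sk / Num.sqrt 2 else 0))).
  { apply: eq_bigr => m _.
  case: (m =P j) => [->|_]; case: (_ =P k) => [->|_].
  all: rewrite /= ?(mul0r,mulr0,add0r,addr0,mul0r).
  all: ring. }
rewrite big_split /= -!big_mkcond !big_pred1_eq; ring.
Qed.


Lemma acos_le (s r : R) : -1 <= s <= 1 -> -1 <= r <= 1 -> s <= r -> acos r <= acos s.
Proof.
move=> hs hr hsr; rewrite leNgt; apply/negP => H.
have Is : acos s \in `[0, pi] by rewrite in_itv /= acos_ge0 ?acos_lepi.
have Ir : acos r \in `[0, pi] by rewrite in_itv /= acos_ge0 ?acos_lepi.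
have := ltr_cos Is Ir => /=; rewrite H !acosK ?in_itv //= => /idP; lra.
Qed.

Lemma sin_dist v c u : dotp v v = 1 -> dotp c c = 1 -> dotp u u = 1 ->
  dotp u c = 0 -> 0 < dotp v c ->
  sin (sdist_set v (great_sphere c)) = dotp v c.
Proof.
move=> Hv Hc Hu Huc.
set t := dotp v c => ht.
have t1 : t ^+ 2 <= 1 by have := quad v c c t 0; rewrite Hv Hc -/t; nra.
have t1' : t <= 1 by nra.
set q := Num.sqrt (1 - t ^+ 2).
have hq0 : 0 <= q by exact: sqrtr_ge0.
have hq2 : q ^+ 2 = 1 - t ^+ 2 by rewrite sqr_sqrtr // subr_ge0.
have hq1 : q <= 1 by nra.
have bound : forall y, great_sphere c y -> (dotp v y) ^+ 2 <= 1 - t ^+ 2.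
  move=> y [Hy Hyc]; have := quad v c y t (dotp v y).
  rewrite Hv Hc Hy (dotpC c y) Hyc -/t; nra.
have [y0 [Gy0 Hy0]] : exists y, great_sphere c y /\ dotp v y = q.
  have [tl1|tg1] := ltrP t 1.
  - have qp : 0 < q by rewrite sqrtr_gt0; nra.
    have qn : q != 0 by rewrite gt_eqF.
    set y := fun m => (v m - t * c m) / q.
    have dvy : dotp v y = q.
      rewrite dotpC dotp_lin Hv (dotpC c v) -/t.
      apply: (mulIf qn); rewrite mulrBl !divfK // -expr2 hq2; ring.
    have dyc : dotp y c = 0 by rewrite dotp_lin Hc -/t; field.
    exists y; split => //; split => //.
    rewrite /sphere /= dotp_lin dvy (dotpC c y) dyc divff //; ring.
  - have t_1 : t = 1 by lra.
    exists u; split; first by split => //.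
    have := bound u (conj Hu Huc); rewrite t_1 /q t_1 expr1n subrr sqrtr0.
    move=> h; apply/eqP; rewrite -sqrf_eq0 eq_le h sqr_ge0 //.
rewrite /sdist_set.
have lb : lbound [set sdist v y | y in great_sphere c] (acos q).
  move=> x [y Gy <-]; rewrite /sdist.
  have := bound y Gy => b.
  apply: acos_le; [nra|nra|nra].
have -> : inf [set sdist v y | y in great_sphere c] = acos q.
  apply/eqP; rewrite eq_le; apply/andP; split.
  - apply: (ge_inf (E := [set sdist v y | y in great_sphere c])).
      by exists (acos q).
    by exists y0 => //; rewrite /sdist Hy0.
  - by apply: lb_le_inf => //; exists (acos q); exists y0 => //; rewrite /sdist Hy0.
rewrite sin_acos; last by nra.
by rewrite hq2 opprB addrC subrK sqrtr_sqr ger0_norm // ltW.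
Qed.

End S.
Section S2.
Variable R : realType.
Variable n : nat.

Lemma sqrt2_inv : 2 * (Num.sqrt (2:R))^-1 ^+ 2 = 1.
Proof. by rewrite exprVn sqr_sqrtr // divff. Qed.

Lemma center_norm (j k : 'I_n) sj sk (b1 b2 : bool) : j != k ->
  dotp (root_center j k sj (b1 (+) sk)) (root_center (R:=R) j k sj (b2 (+) sk)) =
  (if b1 == b2 then 1 else 0).
Proof.
move=> hjk; rewrite dotp_center /root_center eqxx (negbTE hjk) eq_sym (negbTE hjk) /=.
have := @sqrt2_inv; set w := (Num.sqrt 2)^-1 => hw.
rewrite !addr0 !add0r.
by case: sj; case: sk; case: b1; case: b2 => /=; rewrite ?expr0 ?expr1 ?eqxx; nra.
Qed.

Definition aval (i : nat) : R :=
  if i == 2%N then 1 / Num.sqrt (n%:R) else 1 / Num.sqrt ((n + 1 - i)%:R).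

Definition P3 (a x : R) := x = a \/ x = - a \/ x = 0.

Lemma aval_gt0 i : (0 < n)%N -> (i <= n)%N -> 0 < aval i.
Proof.
move=> n0 hi; rewrite /aval; case: ifP => _; rewrite divr_gt0 // sqrtr_gt0 ltr0n //.
by rewrite subn_gt0 addn1 ltnS.
Qed.

Lemma rep_cases i (m : 'I_n) : (0 < n)%N -> (i <= n)%N ->
  P3 (aval i) (type_rep n i m) /\
  ((i == 1)%N || (i == 2)%N -> type_rep (R:=R) n i m != 0) /\
  (i = n -> n != 2%N -> type_rep (R:=R) n i m != 0 -> val m = n.-1).
Proof.
move=> n0 hi; have a0 := aval_gt0 i n0 hi.
rewrite /type_rep /P3; move: a0; rewrite /aval.
case: (eqVneq i 2%N) => [->|i2] /= a0.
  split; first by case: ifP => _; [right; left; rewrite mulNr | left].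
  split; first by move=> _; case: ifP => _; rewrite ?mulNr ?oppr_eq0 gt_eqF.
  by move=> e ne; rewrite -e eqxx in ne.
split; first by case: ifP => _; [left | right; right; rewrite mul0r].
split.
  move=> h; have -> : i = 1%N by move: h i2; case/orP => /eqP.
  by rewrite /= gt_eqF // divr_gt0 // sqrtr_gt0 ltr0n addnK.
move=> ein n2; case: ifP => h; last by rewrite mul0r eqxx.
move=> _; subst i; apply/eqP; rewrite eqn_leq h andbT.
by rewrite -ltnS prednK // ltn_ord.
Qed.

Lemma P3_sign a x (b : bool) : P3 a x -> P3 a ((-1) ^+ b * x).
Proof. by rewrite /P3; case: b; rewrite ?expr0 ?expr1 ?mul1r ?mulN1r; lra. Qed.

Lemma comb a x y : 0 < a -> P3 a x -> P3 a y -> 0 < x + y ->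
  (x + y = a \/ x + y = 2 * a) /\ (x = 0 \/ y = 0 -> x + y = a) /\
  (x != 0 -> y != 0 -> x + y = 2 * a).
Proof.
move=> a0 [->|[->|->]] [->|[->|->]] h; rewrite ?eqxx; split; try lra; split => //; try lra;
  rewrite ?oppr_eq0 ?(gt_eqF a0) //; try lra; move=> [] /eqP; rewrite ?oppr_eq0 ?(gt_eqF a0) //.
Qed.

End S2.
Lemma lam_eq (R : realType) n i : (0 < n)%N -> (i <= n)%N ->
  lam (R:=R) n i = aval R n i / Num.sqrt 2.
Proof.
move=> n0 hi; have s2 : Num.sqrt (2:R) != 0 by rewrite gt_eqF // sqrtr_gt0.
rewrite /lam /aval; case: ifP => _; rewrite natrM sqrtrM ?ler0n //.
  have sn : Num.sqrt (n%:R : R) != 0 by rewrite gt_eqF // sqrtr_gt0 ltr0n.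
  by field; rewrite s2 sn.
have sn : Num.sqrt ((n + 1 - i)%:R : R) != 0.
  by rewrite gt_eqF // sqrtr_gt0 ltr0n subn_gt0 addn1 ltnS.
by field; rewrite s2 sn.
Qed.

Lemma sgn_nz (R : realType) (b1 b2 : bool) (r : R) :
  ((-1) ^+ b1 * ((-1) ^+ b2 * r) != 0) = (r != 0).
Proof. by rewrite !mulf_eq0 !signr_eq0. Qed.

Theorem lemma2p14 (R : realType) (n : nat) (hn : (4 <= n)%N)
  (i : nat) (hi : (1 <= i <= n)%N)
  (j k : 'I_n) (hjk : j != k) (sj sk : bool) (v : 'I_n -> R) :
  vertex_of_type n i v ->
  root_interior (root_center j k sj sk) v ->
  let d := sin (sdist_set v (great_sphere (root_center j k sj sk))) in
  (d = lam n i \/ d = 2 * lam n i) /\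
  (i = n -> d = lam n n) /\
  (i = 1%N \/ i = 2%N -> d = 2 * lam (R := R) n 1 /\ d = 2 * lam (R := R) n 2).
Proof.
move=> [s [e [_ ->]]] [[Hsph Hge] Hng] d.
have n0 : (0 < n)%N by apply: leq_trans hn.
have hin : (i <= n)%N by case/andP: hi.
have Hc := center_norm R n j k sj sk false false hjk; rewrite /= in Hc.
have Huu := center_norm R n j k sj sk true true hjk; rewrite /= in Huu.
have Huc := center_norm R n j k sj sk true false hjk; rewrite /= in Huc.
set c := root_center j k sj sk in Hc Huc Hge Hng d *.
set u := root_center j k sj (~~ sk) in Huu Huc.
set w := weyl_act s e (type_rep n i) in Hsph Hge Hng d *.
have ht : 0 < dotp w c.
  rewrite lt_def Hge andbT; apply/eqP => h; apply: Hng; by split.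
have Hd := @sin_dist R n w c u Hsph Hc Huu Huc ht.
rewrite /d Hd /c dotp_center /w /weyl_act.
set x := (-1) ^+ sj * ((-1) ^+ e j * type_rep n i (s j)).
set y := (-1) ^+ sk * ((-1) ^+ e k * type_rep n i (s k)).
have [Pj [Nj Lj]] := rep_cases R n i (s j) n0 hin.
have [Pk [Nk Lk]] := rep_cases R n i (s k) n0 hin.
have Px : P3 R (aval R n i) x by do 2 apply: P3_sign.
have Py : P3 R (aval R n i) y by do 2 apply: P3_sign.
have a0 := aval_gt0 R n i n0 hin.
have s2 : 0 < Num.sqrt (2:R) by rewrite sqrtr_gt0.
have xy0 : 0 < x + y.
  move: ht; rewrite /c dotp_center /w /weyl_act -/x -/y.
  by rewrite pmulr_lgt0 // invr_gt0.
have [C1 [C2 C3]] := comb R _ _ _ a0 Px Py xy0.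
rewrite (lam_eq R n i n0 hin).
split; last split.
- case: C1 => ->; [left | right]; ring.
- move=> ein.
  have Ln : lam (R:=R) n n = lam n i by rewrite ein.
  rewrite Ln (lam_eq R n i n0 hin) C2 //.
  have n2 : n != 2%N by rewrite neq_ltn; apply/orP; right; apply: leq_trans hn.
  have [xz|xnz] := eqVneq x 0; first by left.
  have [yz|ynz] := eqVneq y 0; first by right.
  exfalso; move: hjk => /eqP; apply; apply: (@perm_inj _ s); apply: val_inj.
  have rj : type_rep (R:=R) n i (s j) != 0 by rewrite -(sgn_nz R sj (e j)).
  have rk : type_rep (R:=R) n i (s k) != 0 by rewrite -(sgn_nz R sk (e k)).
  by rewrite (Lj ein n2 rj) (Lk ein n2 rk).
- move=> h12.
  have h' : (i == 1)%N || (i == 2)%N by case: h12 => ->.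
  have E : x + y = 2 * aval R n i.
    by apply: C3; rewrite ?sgn_nz; [apply: Nj | apply: Nk].
  have L12 : lam (R:=R) n 1 = lam n 2 by rewrite /lam /= addnK.
  have Li : lam (R:=R) n i = lam n 1 by case: h12 => ->.
  rewrite -L12 -Li (lam_eq R n i n0 hin) E; split; ring.
Qed.
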